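(* Consider the two-player Tower of Hanoi game under normal play on $l\ge4$ pegs. If $n=2$, the game is a draw for the ending conditions (EC1), (EC2), (EC3), and the first player (Anh) wins for (EC4) and (EC5). If $n=1$, the first player wins (in her first move) for (EC1), (EC4), (EC5).
   Context: Tower of Hanoi on $l$ pegs (labeled $1,\dots,l$) with $n$ disks of pairwise distinct sizes: a position assigns each disk to a peg, disks on each peg stacked with sizes decreasing from bottom to top. A legal move transfers the top disk of one peg to a different peg that is empty or has a larger top disk. A tower position is one with all disks on one peg. Two-player game: Anh (first player) and Bao (second player) alternate moves starting from the position with all disks on Peg 1; a player may not move the disk that the opponent moved in the immediately preceding move. The game ends when the tower has been transferred to a final peg, according to one fixed ending condition: (EC1) all disks on a given peg distinct from Peg 1; (EC2) all disks on Peg 1, the largest disk having been moved at least once; (EC3) all disks on Peg 1, the smallest disk having been moved at least once; (EC4) all disks on any peg, the largest disk having been moved at least once; (EC5) all disks on any peg, the smallest disk having been moved at least once. A move creating a tower position that does not end the game (tower on a non-final peg) is not allowed. Normal play: the player who makes the last (game-ending) move wins; if neither player can force a win, the game is a draw. *)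

(* Defs.v *)
From mathcomp Require Import all_boot.
Set Implicit Arguments. Unset Strict Implicit. Unset Printing Implicit Defensive.

(* Conventions: pegs are 'I_l (paper's Peg k is peg k-1 here, so Peg 1 = 0);
   disks are 'I_n, disk d having size d (0 = smallest, n-1 = largest).
   A position is a map disk -> peg; the stacking order on each peg is
   determined by the sizes, so every map is a position. *)

Inductive ending_condition :=
| EC1 (f : nat)   (* all disks on the given peg f (0-based), f <> Peg 1 *)
| EC2 | EC3 | EC4 | EC5.

Record state (l n : nat) := State {
  pos : 'I_n -> 'I_l;
  last_moved : option 'I_n;
  big_moved : bool;
  small_moved : bool
}.

Definition is_tower l n (p : 'I_n -> 'I_l) (k : 'I_l) : Prop :=
  forall d, p d = k.

Definition tower_position l n (s : state l n) : Prop :=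
  exists k, is_tower (pos s) k.

Definition legal_move l n (s : state l n) (d : 'I_n) (q : 'I_l) : Prop :=
  last_moved s <> Some d /\ pos s d <> q /\
  (forall e : 'I_n, e < d -> pos s e <> pos s d /\ pos s e <> q).

Definition apply_move l n (s : state l n) (d : 'I_n) (q : 'I_l) : state l n :=
  State (fun e => if e == d then q else pos s e) (Some d)
        (big_moved s || (val d == n.-1)) (small_moved s || (val d == 0)).

Definition ends l n (c : ending_condition) (s : state l n) : Prop :=
  match c with
  | EC1 f => exists k : 'I_l, val k = f /\ is_tower (pos s) k
  | EC2 => exists k : 'I_l, val k = 0 /\ is_tower (pos s) k /\ big_moved s
  | EC3 => exists k : 'I_l, val k = 0 /\ is_tower (pos s) k /\ small_moved s
  | EC4 => exists k : 'I_l, is_tower (pos s) k /\ big_moved s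
  | EC5 => exists k : 'I_l, is_tower (pos s) k /\ small_moved s
  end.

Definition game_move l n (c : ending_condition) (s : state l n) d q : Prop :=
  legal_move s d q /\
  (tower_position (apply_move s d q) -> ends c (apply_move s d q)).

(* Win s : the player to move in s can force a win (in finitely many moves).
   Lose s : the opponent (the player who just moved) can force a win.
   A player with no allowed move loses (normal play). *)
Inductive Win l n (c : ending_condition) : state l n -> Prop :=
| win_intro s d q :
    game_move c s d q ->
    (ends c (apply_move s d q) \/ Lose c (apply_move s d q)) -> Win c s
with Lose l n (c : ending_condition) : state l n -> Prop :=
| lose_intro s :
    (forall d q, game_move c s d q ->
       ~ ends c (apply_move s d q) /\ Win c (apply_move s d q)) -> Lose c s.

Definition Draw l n (c : ending_condition) (s : state l n) : Prop :=
  ~ Win c s /\ ~ Lose c s.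

Definition wins_in_one l n (c : ending_condition) (s : state l n) : Prop :=
  exists d q, game_move c s d q /\ ends c (apply_move s d q).

Definition start l n (Hl : 0 < l) : state l n :=
  State (fun _ => Ordinal Hl) None false false.

(* Main.v *)
Require Import Defs.
From mathcomp Require Import all_boot zify.
From Stdlib Require Import Classical.

Fixpoint nw l n c (A B : state l n -> Prop)
  (HA : forall s d q, A s -> game_move c s d q ->
        ~ ends c (apply_move s d q) /\ B (apply_move s d q))
  (HB : forall s, B s -> exists d q, game_move c s d q /\ A (apply_move s d q))
  s (w : Win c s) {struct w} : ~ A s :=
  match w with
  | win_intro s d q gm hor => fun a =>
      match HA s d q a gm with conj ne b =>
      match hor with or_introl e => ne e | or_intror lo => nl _ _ _ _ _ HA HB _ lo b end end
  end
with nl l n c (A B : state l n -> Prop)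
  (HA : forall s d q, A s -> game_move c s d q ->
        ~ ends c (apply_move s d q) /\ B (apply_move s d q))
  (HB : forall s, B s -> exists d q, game_move c s d q /\ A (apply_move s d q))
  s (lo : Lose c s) {struct lo} : ~ B s :=
  match lo with lose_intro s hall => fun b =>
     match HB s b with ex_intro d (ex_intro q (conj gm a)) =>
       match hall d q gm with conj _ w => nw _ _ _ _ _ HA HB _ w a end end end.

Fixpoint nl2 l n c (A B : state l n -> Prop)
  (HA : forall s, A s -> exists d q, game_move c s d q /\ B (apply_move s d q))
  (HB : forall s d q, B s -> game_move c s d q ->
        ~ ends c (apply_move s d q) /\ A (apply_move s d q))
  s (lo : Lose c s) {struct lo} : ~ A s :=
  match lo with lose_intro s hall => fun a =>
     match HA s a with ex_intro d (ex_intro q (conj gm b)) =>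
       match hall d q gm with conj _ w => nw2 _ _ _ _ _ HA HB _ w b end end end
with nw2 l n c (A B : state l n -> Prop)
  (HA : forall s, A s -> exists d q, game_move c s d q /\ B (apply_move s d q))
  (HB : forall s d q, B s -> game_move c s d q ->
        ~ ends c (apply_move s d q) /\ A (apply_move s d q))
  s (w : Win c s) {struct w} : ~ B s :=
  match w with
  | win_intro s d q gm hor => fun b =>
      match HB s d q b gm with conj ne a =>
      match hor with or_introl e => ne e | or_intror lo => nl2 _ _ _ _ _ HA HB _ lo a end end
  end.

Lemma pick3 l (a b : 'I_l) (m : nat) : 3 < l ->
  exists q : 'I_l, q <> a /\ q <> b /\ val q <> m.
Proof.
move=> Hl; apply: NNPP => Hn.
have H k (Hk : k < l) : k = a \/ k = b \/ k = m.
  apply: NNPP => H'; apply: Hn; exists (Ordinal Hk).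
  split; [|split] => E; apply: H'; [left|right;left|right;right]; by rewrite -E.
have h0 := H 0 ltac:(lia); have h1 := H 1 ltac:(lia);
have h2 := H 2 ltac:(lia); have h3 := H 3 ltac:(lia).
lia.
Qed.

Definition d0 : 'I_2 := ord0.
Definition d1 : 'I_2 := @Ordinal 2 1 isT.

Lemma I2_cases (d : 'I_2) : d = d0 \/ d = d1.
Proof. case: d => [[|[|k]] Hk]; [left|right|]; try by apply: val_inj. by []. Qed.

Lemma ends_tower l n c (s : state l n) : ends c s -> exists k, is_tower (pos s) k.
Proof. case: c => [f||||] /=.
all: try by case=> k [] ? ?; exists k.
all: try by case=> k [] ? [] ? ?; exists k.
Qed.

Definition badn c := match c with EC1 f => f | _ => 0 end.
Definition okc c := match c with EC4 | EC5 => False | _ => True end.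

Lemma ends_bad l n c (s : state l n) : okc c -> ends c s ->
  exists k, val k = badn c /\ is_tower (pos s) k.
Proof. case: c => [f||||] //= _.
all: try by case=> k [] ? ?; exists k.
all: try by case=> k [] ? [] ? ?; exists k.
Qed.

Lemma d10 : Some d1 <> Some d0. Proof. by case. Qed.

Lemma tow2 l (p : 'I_2 -> 'I_l) k : is_tower p k <-> p d0 = k /\ p d1 = k.
Proof.
split; first by move=> H; split; apply: H.
by case=> H0 H1 e; case: (I2_cases e) => ->.
Qed.

Lemma towp2 l (s : state l 2) : tower_position s <-> pos s d0 = pos s d1.
Proof.
split; first by case=> k /tow2 [-> ->].
by move=> E; exists (pos s d1); apply/tow2.
Qed.

Lemma am00 l (t : state l 2) q : pos (apply_move t d0 q) d0 = q. Proof. by []. Qed.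
Lemma am01 l (t : state l 2) q : pos (apply_move t d0 q) d1 = pos t d1. Proof. by []. Qed.
Lemma am10 l (t : state l 2) q : pos (apply_move t d1 q) d0 = pos t d0. Proof. by []. Qed.
Lemma am11 l (t : state l 2) q : pos (apply_move t d1 q) d1 = q. Proof. by []. Qed.

Lemma noWin2 l c (s : state l 2) : 3 < l -> okc c ->
  last_moved s <> Some d0 ->
  (last_moved s = None -> pos s d0 = pos s d1) ->
  (last_moved s = Some d1 -> val (pos s d1) <> badn c) -> ~ Win c s.
Proof.
move=> Hl Hc H1 H2 H3.
pose A (s : state l 2) := last_moved s <> Some d0 /\
  (last_moved s = None -> pos s d0 = pos s d1) /\
  (last_moved s = Some d1 -> val (pos s d1) <> badn c).
pose B (s : state l 2) := last_moved s = Some d0 /\ pos s d0 <> pos s d1.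
move=> W; refine (@nw l 2 c A B _ _ s W _); last by split.
- move=> t d q [a1 [a2 a3]] [[L1 [L2 L3]] T].
  case: (I2_cases d) => ->{d} in L1 L2 L3 T *.
  + have Hq : q <> pos t d1.
      move=> E; subst q.
      have /ends_bad [//|k [Hk /tow2 [_ Tk]]] := T (proj2 (towp2 _ (apply_move t d0 (pos t d1))) erefl).
      case Et: (last_moved t) => [x|] in a1 a2 a3 L1.
      * case: (I2_cases x) => Ex; subst x; first by [].
        by apply: (a3 erefl); rewrite am01 in Tk; rewrite Tk.
      * by apply: L2; apply: a2.
    split; last by split => //=; rewrite am00 am01.
    by move/ends_tower=> [k /tow2 [E0 E1]]; apply: Hq; rewrite am00 in E0; rewrite am01 in E1; congruence.
  + exfalso.
    case Et: (last_moved t) => [x|] in a1 a2 a3 L1.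
    * by case: (I2_cases x) => Ex; subst x.
    * by have [/(_ (a2 erefl))] := L3 d0 isT.
- move=> t [b1 b2].
  have [q [q1 [q2 q3]]] := pick3 _ (pos t d0) (pos t d1) (badn c) Hl.
  exists d1, q; split; last first.
    split; first exact: d10. split; first by []. by move=> _; rewrite am11.
  split.
    split; first by rewrite b1.
    split; first by move=> E; apply: q2.
    move=> e; rewrite ltnS leqn0 => /eqP He.
    have -> : e = d0 by apply: val_inj.
    split; first exact: b2. move=> E; congruence.
  by move/towp2; rewrite am10 am11 => E; congruence.
Qed.

Lemma noLose2 l c (s : state l 2) : 3 < l ->
  last_moved s <> Some d0 -> ~ Lose c s.
Proof.
move=> Hl H1 Lo.
pose A (s : state l 2) := last_moved s <> Some d0.
pose B (s : state l 2) := last_moved s = Some d0 /\ pos s d0 <> pos s d1.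
refine (@nl2 l 2 c A B _ _ s Lo H1).
- move=> t a.
  have [q [q1 [q2 _]]] := pick3 _ (pos t d0) (pos t d1) 0 Hl.
  exists d0, q; split; last by split => //; rewrite am00 am01.
  split.
    split; first by [].
    split; first by move=> E; apply: q1.
    by [].
  by move/towp2; rewrite am00 am01.
- move=> t d q [b1 b2] [[L1 [L2 L3]] T].
  case: (I2_cases d) => Ed; subst d; first by rewrite b1 in L1.
  have [_ Hq] := L3 d0 isT.
  split; last by [].
  by move/ends_tower=> [k /tow2 [E0 E1]]; apply: Hq; rewrite am10 in E0; rewrite am11 in E1; congruence.
Qed.

Lemma I1_eq (d : 'I_1) : d = ord0. Proof. by apply: val_inj; case: d => [[|]]. Qed.

Lemma win1 l (Hl : 0 < l) c (q : 'I_l) : 0 < val q ->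
  ends c (apply_move (start 1 Hl) ord0 q) -> wins_in_one c (start 1 Hl).
Proof.
move=> Hq He; exists ord0, q; split => //; split => //.
split; first by []. split; last by [].
by move=> E; rewrite -E /= in Hq.
Qed.

Lemma tow1 l (Hl : 0 < l) (q : 'I_l) : is_tower (pos (apply_move (start 1 Hl) ord0 q)) q.
Proof. by move=> d; rewrite (I1_eq d). Qed.

Lemma wio_win l n c (s : state l n) : wins_in_one c s -> Win c s.
Proof. by case=> d [q [gm e]]; apply: (win_intro gm); left. Qed.

Lemma win45 l (Hl : 0 < l) c : 2 < l ->
  (forall (t : state l 2) k, big_moved t -> small_moved t -> is_tower (pos t) k -> ends c t) ->
  Win c (start 2 Hl).
Proof.
move=> H3 He.
have H1 : 1 < l by lia.
pose p1 : 'I_l := Ordinal H1.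
apply: (@win_intro _ _ _ _ d0 p1).
  split; first by split => //; split => // E; have := congr1 val E.
  by move/towp2.
right; apply: lose_intro => d q [[L1 [L2 L3]] T].
case: (I2_cases d) => Ed; subst d; first by [].
have [_ Hq] := L3 d0 isT.
split.
  move/ends_tower => [k /tow2 [E0 E1]].
  rewrite am11 in E1; rewrite am10 in E0; apply: Hq; congruence.
apply: (@win_intro _ _ _ _ d0 q).
  split.
    split; first exact: d10.
    split; first by move=> E; apply: Hq.
    by [].
  move=> _; apply: (He _ q) => //; apply/tow2; by split.
left; apply: (He _ q) => //; apply/tow2; by split.
Qed.

Theorem mainTheorem5 (l : nat) (Hl : 0 < l) : 4 <= l ->
  (* n = 2 *)
  ((forall f, 0 < f < l -> Draw (EC1 f) (start 2 Hl)) /\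
   Draw EC2 (start 2 Hl) /\ Draw EC3 (start 2 Hl) /\
   Win EC4 (start 2 Hl) /\ Win EC5 (start 2 Hl)) /\
  (* n = 1 *)
  ((forall f, 0 < f < l ->
      Win (EC1 f) (start 1 Hl) /\ wins_in_one (EC1 f) (start 1 Hl)) /\
   (Win EC4 (start 1 Hl) /\ wins_in_one EC4 (start 1 Hl)) /\
   (Win EC5 (start 1 Hl) /\ wins_in_one EC5 (start 1 Hl))).
Proof.
move=> H4.
have H3 : 3 < l by lia.
have H2 : 2 < l by lia.
have H1 : 1 < l by lia.
have D : forall c, okc c -> Draw c (start 2 Hl).
  move=> c Hc; split.
    by apply: noWin2 => //.
  by apply: noLose2.
have W1 : forall c (q : 'I_l), 0 < val q -> ends c (apply_move (start 1 Hl) ord0 q) ->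
    Win c (start 1 Hl) /\ wins_in_one c (start 1 Hl).
  move=> c q Hq He; have w := win1 _ _ _ _ Hq He; split => //; exact: wio_win.
split.
  split; first by move=> f _; apply: D.
  split; first by apply: D.
  split; first by apply: D.
  split; apply: win45 => // t k Hb Hs Ht; exists k => //.
split.
  move=> f /andP [Hf0 Hf].
  apply: (W1 _ (Ordinal Hf)) => //; exists (Ordinal Hf); split => //; exact: tow1.
split; apply: (W1 _ (Ordinal H1)) => //; exists (Ordinal H1); split => //; exact: tow1.
Qed.
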